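(* For any pairwise commuting qubit states $\rho,\sigma,\omega\in\mathcal{S}(\mathbb{C}^2)$, $$d^2_{\mathrm{symm},2}(\rho,\sigma)+d^2_{\mathrm{symm},2}(\sigma,\omega)\ge d^2_{\mathrm{symm},2}(\rho,\omega).$$
   Context: Qubit setting: $\mathcal{H}=\mathbb{C}^2$, $\mathcal{H}^*$ is identified with $\mathbb{C}^2$ via the dual basis, and $A^T$ is the usual matrix transpose; operators on $\mathcal{H}\otimes\mathcal{H}^*$ are $4\times4$ matrices in the basis $e_1\otimes e_1^*,e_1\otimes e_2^*,e_2\otimes e_1^*,e_2\otimes e_2^*$. Pauli matrices: $\sigma_1=\begin{pmatrix}0&1\\1&0\end{pmatrix}$, $\sigma_2=\begin{pmatrix}0&-i\\i&0\end{pmatrix}$, $\sigma_3=\begin{pmatrix}1&0\\0&-1\end{pmatrix}$. The set of couplings of states $\rho,\omega$ is $\mathcal{C}(\rho,\omega)=\{\Pi\in\mathcal{S}(\mathcal{H}\otimes\mathcal{H}^* ):\mathrm{tr}_{\mathcal{H}^*}[\Pi]=\omega,\ \mathrm{tr}_{\mathcal{H}}[\Pi]=\rho^T\}$. $C_{\mathrm{symm},2}=\sum_{k=1}^3(\sigma_k\otimes I^T-I\otimes\sigma_k^T)^2$, which equals the matrix $\begin{pmatrix}4&0&0&-4\\0&8&0&0\\0&0&8&0\\-4&0&0&4\end{pmatrix}$; $D^2_{\mathrm{symm},2}(\rho,\omega)=\min_{\Pi\in\mathcal{C}(\rho,\omega)}\mathrm{tr}[\Pi C_{\mathrm{symm},2}]$,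 and $d_{\mathrm{symm},2}(\rho,\omega)=\big(D^2_{\mathrm{symm},2}(\rho,\omega)-\tfrac12(D^2_{\mathrm{symm},2}(\rho,\rho)+D^2_{\mathrm{symm},2}(\omega,\omega))\big)^{1/2}$. Note the claim is the triangle inequality for the squared quantity $d^2_{\mathrm{symm},2}$. *)

(* Defs.v *)
From HB Require Import structures.
From mathcomp Require Import all_boot all_order all_algebra.
From mathcomp Require Import complex mxtens.
From mathcomp Require Import classical_sets reals.
Set Implicit Arguments. Unset Strict Implicit. Unset Printing Implicit Defensive.
Import Order.TTheory GRing.Theory Num.Theory.
Local Open Scope ring_scope.

Section Defs.
Variable R : realType.
Local Notation C := R[i].

Definition adjmx {m n} (A : 'M[C]_(m, n)) : 'M[C]_(n, m) :=
  (map_mx (@conjc R) A)^T.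

(* positive semidefinite: <v, A v> >= 0 for all v (in the order of C,
   i.e. real and nonnegative) *)
Definition psd {n} (A : 'M[C]_n) : Prop :=
  forall v : 'cV[C]_n, 0 <= (adjmx v *m A *m v) ord0 ord0.

Definition state {n} (A : 'M[C]_n) : Prop := psd A /\ \tr A = 1.

Definition pauli1 : 'M[C]_2 := \matrix_(i < 2, j < 2) (if i != j then 1 else 0).
Definition pauli2 : 'M[C]_2 := \matrix_(i < 2, j < 2)
  (if (i == 0) && (j == 1) then - 'i%C else if (i == 1) && (j == 0) then 'i%C else 0).
Definition pauli3 : 'M[C]_2 := \matrix_(i < 2, j < 2)
  (if i == j then (if i == 0 then 1 else -1) else 0).

(* operators on H (x) H^*, basis e_i (x) e_j^* indexed by mxtens_index (i,j) = 2i+j *)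
Definition Csymm2 : 'M[C]_(2 * 2) :=
  \sum_(k <- [:: pauli1; pauli2; pauli3])
     (k *t (1%:M : 'M[C]_2)^T - (1%:M : 'M[C]_2) *t k^T) ^+ 2.

Definition ptr2 (P : 'M[C]_(2 * 2)) : 'M[C]_2 :=
  \matrix_(i < 2, k < 2) \sum_(j < 2) P (mxtens_index (i, j)) (mxtens_index (k, j)).
Definition ptr1 (P : 'M[C]_(2 * 2)) : 'M[C]_2 :=
  \matrix_(j < 2, l < 2) \sum_(i < 2) P (mxtens_index (i, j)) (mxtens_index (i, l)).

Definition coupling (rho omega : 'M[C]_2) (P : 'M[C]_(2 * 2)) : Prop :=
  state P /\ ptr2 P = omega /\ ptr1 P = rho^T.

(* D^2_{symm,2}(rho, omega) = min over couplings of tr[P C]; tr[P C] is real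
   for P psd, we take its real part. The min is attained (compact set), so
   it coincides with the infimum used here. *)
Definition Dsymm2_sq (rho omega : 'M[C]_2) : R :=
  inf [set x : R | exists P, coupling rho omega P /\ x = complex.Re (\tr (P *m Csymm2))]%classic.

Definition dsymm2_sq (rho omega : 'M[C]_2) : R :=
  Dsymm2_sq rho omega - (Dsymm2_sq rho rho + Dsymm2_sq omega omega) / 2.

End Defs.

(* Main.v *)
Require Import Defs.
From HB Require Import structures.
From mathcomp Require Import all_boot all_order all_algebra.
From mathcomp Require Import complex mxtens.
From mathcomp Require Import classical_sets reals.
From mathcomp Require Import ring lra.
Import Order.TTheory GRing.Theory Num.Theory.
Local Open Scope ring_scope.
Set Implicit Arguments. Unset Strict Implicit.

Section S.
Variable R : realType.
Local Notation C := R[i].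
Definition i0 : 'I_2 := @Ordinal 2 0 isT.
Definition i1 : 'I_2 := @Ordinal 2 1 isT.
Local Notation idx a b := (@mxtens_index 2 2 (a, b)).

Lemma sum2 (F : 'I_2 -> C) : \sum_(i < 2) F i = F i0 + F i1.
Proof. by rewrite !big_ord_recl big_ord0 addr0; congr (F _ + F _); apply: val_inj. Qed.

Lemma ord2P (i : 'I_2) : i = i0 \/ i = i1.
Proof. case: i => [[|[|//]]] h; [left|right]; exact: val_inj. Qed.

Lemma sum4 (F : 'I_(2*2) -> C) : \sum_(k < 2*2) F k =
  F (idx i0 i0) + F (idx i0 i1) + F (idx i1 i0) + F (idx i1 i1).
Proof.
rewrite (reindex (@mxtens_index 2 2)) /=; last first.
  by exists (@mxtens_unindex 2 2) => k _; rewrite (mxtens_indexK, mxtens_unindexK).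
rewrite (eq_bigr (fun p => F (idx p.1 p.2))); last by case.
rewrite -(pair_bigA _ (fun a b => F (idx a b))) /=.
by rewrite sum2 !sum2 !addrA.
Qed.


Definition Xk (k : 'M[C]_2) : 'M[C]_(2*2) := k *t (1%:M : 'M[C]_2)^T - (1%:M : 'M[C]_2) *t k^T.
Lemma XkE k a1 a2 b1 b2 : Xk k (idx a1 a2) (idx b1 b2) =
  k a1 b1 * (a2 == b2)%:R - (a1 == b1)%:R * k b2 a2.
Proof. by rewrite /Xk !mxE !mxtens_indexK /= eq_sym. Qed.


Lemma CsymmE : Csymm2 R = Xk (pauli1 R) *m Xk (pauli1 R) + Xk (pauli2 R) *m Xk (pauli2 R) + Xk (pauli3 R) *m Xk (pauli3 R).
Proof. rewrite /Csymm2. rewrite !big_cons. rewrite big_nil. rewrite [X in _ + (_ + X)]addr0. rewrite !expr2. rewrite -!mulmxE. rewrite addrA. reflexivity. Qed.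
Lemma ii : 'i%C * 'i%C = -1 :> C. Proof. by rewrite -expr2 sqr_i. Qed.
Lemma Centry (a1 a2 b1 b2 : 'I_2) : Csymm2 R (idx a1 a2) (idx b1 b2) =
  8 * ((a1 == b1) && (a2 == b2))%:R - 4 * ((a1 == a2) && (b1 == b2))%:R.
Proof.
rewrite CsymmE.
move: (XkE (pauli1 R)) (XkE (pauli2 R)) (XkE (pauli3 R)).
move: (Xk (pauli1 R)) (Xk (pauli2 R)) (Xk (pauli3 R)) => X1 X2 X3 h1 h2 h3.
rewrite !mxE.
rewrite !sum4 !h1 !h2 !h3.
case: (ord2P a1) => ->; case: (ord2P a2) => ->; case: (ord2P b1) => ->; case: (ord2P b2) => ->.
all: rewrite !mxE /=.
all: rewrite ?(mul0r,mulr0,mul1r,mulr1,subr0,sub0r,subrr,addr0,add0r,mulrN,mulNr,opprK, mulN1r, mulrN1,ii).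
all: ring.
Qed.
End S.


Section T.
Variable R : realType.
Local Notation C := R[i].
Local Notation idx a b := (@mxtens_index 2 2 (a, b)).
Definition conjm {m n} (U : 'M[C]_(m,n)) := map_mx (@conjc R) U.
Definition Kt (U : 'M[C]_2) : 'M[C]_(2*2) := U *t conjm U.
Definition Om (P : 'M[C]_(2*2)) := P (idx i0 i0) (idx i0 i0) + P (idx i0 i0) (idx i1 i1)
  + P (idx i1 i1) (idx i0 i0) + P (idx i1 i1) (idx i1 i1).

Ltac expand := repeat progress rewrite ?mxE ?sum4 ?sum2 ?mxtens_indexK /=.

Lemma ptr2_K U P : adjmx U *m U = 1%:M ->
  ptr2 (Kt U *m P *m adjmx (Kt U)) = U *m ptr2 P *m adjmx U.
Proof.
move=> hU; apply/matrixP => i k.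
transitivity (\sum_(a1<2)\sum_(a2<2)\sum_(b1<2)\sum_(b2<2)
  U i a1 * P (idx a1 a2) (idx b1 b2) * conjc (U k b1) * (adjmx U *m U) a2 b2).
  expand; rewrite !rmorphM /= !conjcK; ring.
rewrite hU /ptr2; expand; ring.
Qed.

Lemma ptr1_K U P : adjmx U *m U = 1%:M ->
  ptr1 (Kt U *m P *m adjmx (Kt U)) = conjm U *m ptr1 P *m U^T.
Proof.
move=> hU; apply/matrixP => j l.
transitivity (\sum_(a1<2)\sum_(a2<2)\sum_(b1<2)\sum_(b2<2)
  conjc (U j a2) * P (idx a1 a2) (idx b1 b2) * U l b2 * (adjmx U *m U) b1 a1).
  expand; rewrite !rmorphM /= !conjcK; ring.
rewrite hU /ptr1; expand; ring.
Qed.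

Lemma tr_K U P : adjmx U *m U = 1%:M ->
  \tr (Kt U *m P *m adjmx (Kt U)) = \tr P.
Proof.
move=> hU.
transitivity (\sum_(a1<2)\sum_(a2<2)\sum_(b1<2)\sum_(b2<2)
  P (idx a1 a2) (idx b1 b2) * (adjmx U *m U) b1 a1 * (adjmx U *m U) a2 b2).
  rewrite /mxtrace; expand; rewrite !rmorphM /= !conjcK; ring.
rewrite hU /mxtrace; expand; ring.
Qed.

Lemma conj1E (a b : 'I_2) : conjc ((1%:M : 'M[C]_2) a b) = (1%:M : 'M[C]_2) a b.
Proof. by rewrite mxE; case: (a == b); rewrite ?conjc0 ?conjc1. Qed.

Lemma Om_K U P : adjmx U *m U = 1%:M ->
  Om (Kt U *m P *m adjmx (Kt U)) = Om P.
Proof.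
move=> hU.
transitivity (\sum_(a1<2)\sum_(a2<2)\sum_(b1<2)\sum_(b2<2)
  conjc ((adjmx U *m U) a1 a2) * P (idx a1 a2) (idx b1 b2) * (adjmx U *m U) b1 b2).
  rewrite /Om; expand; rewrite !rmorphD !rmorphM /= !conjcK; ring.
rewrite hU /Om; under eq_bigr do under eq_bigr do under eq_bigr do under eq_bigr do rewrite conj1E.
expand; ring.
Qed.

Lemma cost_formula P : \tr (P *m Csymm2 R) = 8 * \tr P - 4 * Om P.
Proof.
move: (@Centry R); move: (Csymm2 R) => Cm hC.
rewrite /mxtrace /Om; expand; rewrite !hC /=; ring.
Qed.
End T.


Local Open Scope complex_scope.
Local Open Scope ring_scope.
Section D.
Variable R : realType.
Local Notation C := R[i].
Local Notation idx a b := (@mxtens_index 2 2 (a, b)).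
Ltac expand0 := repeat progress rewrite ?mxE ?sum4 ?sum2 ?mxtens_indexK.
Ltac expand := repeat progress rewrite ?mxE ?sum4 ?sum2 ?mxtens_indexK /=.

Lemma conj_if b (x y : C) : conjc (if b then x else y) = if b then conjc x else conjc y.
Proof. by case: b. Qed.
Lemma ReD (x y : C) : complex.Re (x + y) = complex.Re x + complex.Re y. Proof. case: x => a b; case: y => c d; simpc; by []. Qed.
Lemma ReN (x : C) : complex.Re (- x) = - complex.Re x. Proof. case: x => a b; simpc; by []. Qed.
Lemma ReB (x y : C) : complex.Re (x - y) = complex.Re x - complex.Re y. Proof. by rewrite ReD ReN. Qed.
Lemma ReM_l (a : R) (z : C) : complex.Re (a%:C * z) = a * complex.Re z.
Proof. case: z => x y; rewrite -[a%:C]/(a +i* 0)%C; simpc; by []. Qed.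
Lemma Re_real (a : R) : complex.Re (a%:C) = a. Proof. by []. Qed.
Lemma Re1 : complex.Re (1 : C) = 1. Proof. by []. Qed.
Lemma Re_ge0 (z : C) : 0 <= z -> 0 <= complex.Re z.
Proof. by rewrite lecE => /andP[]. Qed.

Lemma adjmx_mul m n p (A : 'M[C]_(m,n)) (B : 'M[C]_(n,p)) :
  adjmx (A *m B) = adjmx B *m adjmx A.
Proof. by rewrite /adjmx map_mxM trmx_mul. Qed.

Lemma adjmxK m n (A : 'M[C]_(m,n)) : adjmx (adjmx A) = A.
Proof. by apply/matrixP => i j; rewrite !mxE conjcK. Qed.

Lemma psd_conj n (A : 'M[C]_n) P : psd P -> psd (A *m P *m adjmx A).
Proof.
move=> hP v; have := hP (adjmx A *m v).
by rewrite adjmx_mul adjmxK !mulmxA.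
Qed.

Definition unitary (U : 'M[C]_2) := adjmx U *m U = 1%:M /\ U *m adjmx U = 1%:M.

Lemma coupling_K U rho omega P : unitary U -> coupling rho omega P ->
  coupling (U *m rho *m adjmx U) (U *m omega *m adjmx U) (Kt U *m P *m adjmx (Kt U)).
Proof.
move=> [hU1 hU2] [[hpsd htr] [h2 h1]]; split; [split|split].
- exact: psd_conj.
- by rewrite tr_K.
- by rewrite ptr2_K // h2.
- rewrite ptr1_K // h1 !trmx_mul /adjmx trmxK mulmxA; by [].
Qed.

Lemma cost_K U P : unitary U ->
  \tr (Kt U *m P *m adjmx (Kt U) *m Csymm2 R) = \tr (P *m Csymm2 R).
Proof. by move=> [hU1 _]; rewrite !cost_formula tr_K // Om_K. Qed.

Lemma adj_real n (v : 'cV[C]_n) : (forall k, conjc (v k ord0) = v k ord0) -> adjmx v = v^T.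
Proof. by move=> h; apply/matrixP => i j; rewrite !mxE (ord1 i) h. Qed.

Lemma psd_diag4 (P : 'M[C]_(2*2)) a1 a2 : psd P -> 0 <= complex.Re (P (idx a1 a2) (idx a1 a2)).
Proof.
move=> hP; apply: Re_ge0.
set v := \col_k (if k == idx a1 a2 then 1 else 0 : C).
have := hP v; rewrite adj_real; last first.
  by move=> k; rewrite /v mxE; case: (_ == _); rewrite ?conjc0 ?conjc1.
rewrite /v.
case: (ord2P a1) => ->; case: (ord2P a2) => ->; expand.
all: rewrite ?(mul0r, mulr0, mul1r, mulr1, addr0, add0r) //.
Qed.

Lemma psd_03 (P : 'M[C]_(2*2)) (x y : R) : psd P ->
  0 <= x * x * complex.Re (P (idx i0 i0) (idx i0 i0)) + y * y * complex.Re (P (idx i1 i1) (idx i1 i1))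
       - x * y * complex.Re (P (idx i0 i0) (idx i1 i1) + P (idx i1 i1) (idx i0 i0)).
Proof.
move=> hP.
set v := \col_k (if k == idx i0 i0 then x%:C else if k == idx i1 i1 then (- y)%:C else 0 : C).
have := hP v; rewrite adj_real; last first.
  move=> k; rewrite /v mxE; case: (_ == _); first by rewrite conjc_real.
  case: (_ == _); by rewrite ?conjc0 ?conjc_real.
rewrite /v; expand; rewrite ?(mul0r, mulr0, addr0, add0r).
move=> /Re_ge0.
set z := (X in 0 <= complex.Re X -> _).
have -> : z = x%:C * (x%:C * P (idx i0 i0) (idx i0 i0)) + (- y)%:C * ((- y)%:C * P (idx i1 i1) (idx i1 i1))
   + x%:C * ((- y)%:C * (P (idx i0 i0) (idx i1 i1) + P (idx i1 i1) (idx i0 i0))) by rewrite /z; ring.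
rewrite !ReD !ReM_l; lra.
Qed.
End D.


Section Rl.
Variable R : realType.
Local Notation sq := (@Num.sqrt R).

Definition G (a b : R) := (sq (Num.min a b) + sq (Num.min (1 - a) (1 - b))) ^+ 2.

Lemma Gle a b : 0 <= a -> b <= 1 -> a <= b -> G a b = a + (1 - b) + 2 * sq a * sq (1 - b).
Proof.
move=> ha hb hab; rewrite /G min_l // min_r; last by lra.
rewrite sqrrD !sqr_sqrtr; [ring| lra | lra].
Qed.

Lemma Gsym a b : G a b = G b a.
Proof. by rewrite /G minC [Num.min (1 - a) _]minC. Qed.

Lemma sqmono x y : 0 <= x -> x <= y -> sq x <= sq y.
Proof. by move=> hx hxy; rewrite ler_sqrt //; lra. Qed.

Lemma G_tri p q s : 0 <= p <= 1 -> 0 <= q <= 1 -> 0 <= s <= 1 ->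
  G p s + G s q <= G p q + G s s.
Proof.
move=> /andP[p0 p1] /andP[q0 q1] /andP[s0 s1].
have Gss : G s s = s + (1 - s) + 2 * sq s * sq (1 - s) by rewrite Gle.
have hs := sqrtr_ge0 s; have hs' := sqrtr_ge0 (1 - s).
have hp := sqrtr_ge0 p; have hp' := sqrtr_ge0 (1 - p).
have hq := sqrtr_ge0 q; have hq' := sqrtr_ge0 (1 - q).
have M x y : 0 <= x -> y <= 1 -> x <= y -> sq x <= sq y /\ sq (1 - y) <= sq (1 - x).
  by move=> hx hy hxy; split; apply: sqmono; lra.
rewrite Gss.
case: (lerP p s) => hps; case: (lerP s q) => hsq; case: (lerP p q) => hpq.
- rewrite (Gle p0 s1 hps) (Gle s0 q1 hsq) (Gle p0 q1 hpq).
  have [h1 h2] := M _ _ p0 s1 hps; have [h3 h4] := M _ _ s0 q1 hsq. nra.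
- lra.
- rewrite (Gle p0 s1 hps) (Gsym s q) (Gle q0 s1 (ltW hsq)) (Gle p0 q1 hpq).
  have [h1 h2] := M _ _ p0 s1 hps; have [h3 h4] := M _ _ q0 s1 (ltW hsq). nra.
- rewrite (Gle p0 s1 hps) (Gsym s q) (Gle q0 s1 (ltW hsq)) (Gsym p q) (Gle q0 p1 (ltW hpq)).
  have [h1 h2] := M _ _ q0 p1 (ltW hpq); have [h3 h4] := M _ _ p0 s1 hps. nra.
- rewrite (Gsym p s) (Gle s0 p1 (ltW hps)) (Gle s0 q1 hsq) (Gle p0 q1 hpq).
  have [h1 h2] := M _ _ s0 p1 (ltW hps); have [h3 h4] := M _ _ p0 q1 hpq. nra.
- rewrite (Gsym p s) (Gle s0 p1 (ltW hps)) (Gle s0 q1 hsq) (Gsym p q) (Gle q0 p1 (ltW hpq)).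
  have [h1 h2] := M _ _ s0 q1 hsq; have [h3 h4] := M _ _ q0 p1 (ltW hpq). nra.
- lra.
- rewrite (Gsym p s) (Gle s0 p1 (ltW hps)) (Gsym s q) (Gle q0 s1 (ltW hsq)) (Gsym p q) (Gle q0 p1 (ltW hpq)).
  have [h1 h2] := M _ _ q0 s1 (ltW hsq); have [h3 h4] := M _ _ s0 p1 (ltW hps). nra.
Qed.

Lemma RL1 (x y u w r : R) : 0 <= x -> 0 <= y -> 0 <= u -> 0 <= w ->
  (forall a b : R, a * b * r <= a * a * x + b * b * y) ->
  x + y + r <= (sq (Num.min (x + w) (x + u)) + sq (Num.min (u + y) (w + y))) ^+ 2.
Proof.
move=> hx hy hu hw H.
have hr : r <= 2 * sq x * sq y.
  have sx := sqrtr_ge0 x; have sy := sqrtr_ge0 y.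
  have ex := sqr_sqrtr hx; have ey := sqr_sqrtr hy.
  case: (ltrP 0 x) => x0; last first.
    have e : x = 0 by lra.
    rewrite e in H *.
    rewrite sqrtr0 ?(mulr0, mul0r); rewrite leNgt; apply/negP => r0.
    have := H ((y + 1) / r) 1; rewrite mulr1 mulfVK ?gt_eqF //; nra.
  case: (ltrP 0 y) => y0; last first.
    have e : y = 0 by lra.
    rewrite e in H *.
    rewrite sqrtr0 ?(mulr0, mul0r); rewrite leNgt; apply/negP => r0.
    have := H 1 ((x + 1) / r); rewrite mul1r mulfVK ?gt_eqF //; nra.
  have := H (sq y) (sq x).
  have sx0 : 0 < sq x by rewrite sqrtr_gt0.
  have sy0 : 0 < sq y by rewrite sqrtr_gt0.
  rewrite -!expr2 ex ey => h.
  have hs : 0 < sq y * sq x by apply: mulr_gt0.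
  nra.
have m1 : sq x <= sq (Num.min (x + w) (x + u)) by apply: sqmono; rewrite // le_min; apply/andP; split; lra.
have m2 : sq y <= sq (Num.min (u + y) (w + y)) by apply: sqmono; rewrite // le_min; apply/andP; split; lra.
have sx := sqrtr_ge0 x; have sy := sqrtr_ge0 y.
have ex := sqr_sqrtr hx; have ey := sqr_sqrtr hy.
nra.
Qed.
End Rl.


Local Open Scope complex_scope.
Local Open Scope ring_scope.
Section E.
Variable R : realType.
Local Notation C := R[i].
Local Notation idx a b := (@mxtens_index 2 2 (a, b)).
Local Notation Re := complex.Re.
Ltac expand0 := repeat progress rewrite ?mxE ?sum4 ?sum2 ?mxtens_indexK.
Ltac expand := repeat progress rewrite ?mxE ?sum4 ?sum2 ?mxtens_indexK /=.

Lemma ReMn n (z : C) : Re (n%:R * z) = n%:R * Re z.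
Proof. by rewrite -(rmorph_nat (real_complex R)) ReM_l. Qed.

Definition V (p q : R) := 8 - 4 * G p q.

Lemma marg rho omega (P : 'M[C]_(2*2)) : coupling rho omega P ->
  [/\ omega i0 i0 = P (idx i0 i0) (idx i0 i0) + P (idx i0 i1) (idx i0 i1),
      omega i1 i1 = P (idx i1 i0) (idx i1 i0) + P (idx i1 i1) (idx i1 i1),
      rho i0 i0 = P (idx i0 i0) (idx i0 i0) + P (idx i1 i0) (idx i1 i0) &
      rho i1 i1 = P (idx i0 i1) (idx i0 i1) + P (idx i1 i1) (idx i1 i1)].
Proof.
move=> [_ [h2 h1]].
have e2 a b : omega a b = ptr2 P a b by rewrite h2.
have e1 a b : rho b a = ptr1 P a b by rewrite h1 mxE.
by rewrite !e2 !e1 /ptr1 /ptr2 !mxE !sum2.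
Qed.

Lemma trP (P : 'M[C]_(2*2)) : \tr P = P (idx i0 i0) (idx i0 i0) + P (idx i0 i1) (idx i0 i1)
  + P (idx i1 i0) (idx i1 i0) + P (idx i1 i1) (idx i1 i1).
Proof. by rewrite /mxtrace sum4. Qed.

Lemma L0 rho omega (P : 'M[C]_(2*2)) : coupling rho omega P -> 0 <= Re (\tr (P *m Csymm2 R)).
Proof.
move=> hc; have [[hpsd htr] _] := hc.
have hRe : Re (\tr P) = 1 by rewrite htr.
rewrite trP !ReD in hRe.
rewrite cost_formula ReB !ReMn trP /Om !ReD.
have d1 := psd_diag4 i0 i1 hpsd; have d2 := psd_diag4 i1 i0 hpsd.
have h := psd_03 1 1 hpsd; rewrite ReD in h.
lra.
Qed.

Lemma L1 rho omega (P : 'M[C]_(2*2)) : coupling rho omega P ->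
  V (Re (rho i0 i0)) (Re (omega i0 i0)) <= Re (\tr (P *m Csymm2 R)).
Proof.
move=> hc; have [[hpsd htr] _] := hc; have [o0 o1 r0 r1] := marg hc.
have hRe : Re (\tr P) = 1 by rewrite htr.
rewrite trP !ReD in hRe.
rewrite cost_formula ReB !ReMn trP /Om !ReD r0 o0 !ReD.
have d1 := psd_diag4 i0 i1 hpsd; have d2 := psd_diag4 i1 i0 hpsd.
have d0 := psd_diag4 i0 i0 hpsd; have d3 := psd_diag4 i1 i1 hpsd.
move: hRe d0 d1 d2 d3.
have h := fun a b => psd_03 a b hpsd; move: h; rewrite ReD.
set x := Re (P (idx i0 i0) (idx i0 i0)); set u := Re (P (idx i0 i1) (idx i0 i1)).
set w := Re (P (idx i1 i0) (idx i1 i0)); set y := Re (P (idx i1 i1) (idx i1 i1)).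
set r1' := Re (P (idx i0 i0) (idx i1 i1)); set r2' := Re (P (idx i1 i1) (idx i0 i0)).
move=> h hRe d0 d1 d2 d3.
rewrite /V /G (_ : 1 - (x + w) = u + y); last by lra.
rewrite (_ : 1 - (x + u) = w + y); last by lra.
have := @RL1 R x y u w (r1' + r2') d0 d3 d1 d2.
have H : forall a b : R, a * b * (r1' + r2') <= a * a * x + b * b * y.
  by move=> a b; have := h a b; lra.
move=> /(_ H); lra.
Qed.
End E.


Local Open Scope complex_scope.
Local Open Scope ring_scope.
Section F.
Variable R : realType.
Local Notation C := R[i].
Local Notation idx a b := (@mxtens_index 2 2 (a, b)).
Local Notation Re := complex.Re.
Ltac expand0 := repeat progress rewrite ?mxE ?sum4 ?sum2 ?mxtens_indexK.
Ltac expand := repeat progress rewrite ?mxE ?sum4 ?sum2 ?mxtens_indexK /=.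

Definition diagm (p : R) : 'M[C]_2 :=
  \matrix_(i, j) (if i == j then (if i == i0 then p%:C else (1 - p)%:C) else 0).

Definition piF (p q m1 m2 s : R) (a1 a2 b1 b2 : 'I_2) : C :=
 if (a1 == a2) && (b1 == b2) then (if a1 == b1 then (if a1 == i0 then m1%:C else m2%:C) else s%:C)
 else if (a1 == b1) && (a2 == b2) then (if a1 == i0 then (q - m1)%:C else (p - m1)%:C) else 0.

Definition Pi p q m1 m2 s : 'M[C]_(2*2) := \matrix_(k, l)
  piF p q m1 m2 s (mxtens_unindex k).1 (mxtens_unindex k).2 (mxtens_unindex l).1 (mxtens_unindex l).2.

Lemma PiE p q m1 m2 s a1 a2 b1 b2 : Pi p q m1 m2 s (idx a1 a2) (idx b1 b2) = piF p q m1 m2 s a1 a2 b1 b2.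
Proof. by rewrite mxE !mxtens_indexK. Qed.

Lemma conjcD (x y : C) : conjc (x + y) = conjc x + conjc y. Proof. exact: rmorphD. Qed.
Lemma conjcM (x y : C) : conjc (x * y) = conjc x * conjc y. Proof. exact: rmorphM. Qed.
Lemma conjcN (x : C) : conjc (- x) = - conjc x. Proof. exact: rmorphN. Qed.

Lemma adjE m n (A : 'M[C]_(m,n)) i j : adjmx A i j = conjc (A j i). Proof. by rewrite !mxE. Qed.

Ltac closeC R := first [by rewrite addr0 | by []
  | rewrite -?(rmorph1 (real_complex R)) -!rmorphD; apply: congr1; lra].

Lemma Pi_coupling p q m1 m2 s :
  p - m1 + m2 = 1 - q -> q - m1 + m2 = 1 - p -> 0 <= m1 -> 0 <= m2 ->
  0 <= q - m1 -> 0 <= p - m1 -> s = Num.sqrt m1 * Num.sqrt m2 ->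
  coupling (diagm p) (diagm q) (Pi p q m1 m2 s).
Proof.
move=> e1 e2 h1 h2 h3 h4 hs; split; [split|split].
- move=> v.
  move: (PiE p q m1 m2 s); move: (Pi p q m1 m2 s) => M hM.
  rewrite !mxE !sum4 !mxE !sum4 !hM /piF /= !adjE.
  set a := Num.sqrt m1; set b := Num.sqrt m2.
  have em1 : m1%:C = a%:C * a%:C by rewrite -rmorphM -expr2 sqr_sqrtr.
  have em2 : m2%:C = b%:C * b%:C by rewrite -rmorphM -expr2 sqr_sqrtr.
  have es : s%:C = a%:C * b%:C by rewrite -rmorphM hs.
  rewrite em1 em2 es.
  set v00 := v (idx i0 i0) ord0; set v01 := v (idx i0 i1) ord0.
  set v10 := v (idx i1 i0) ord0; set v11 := v (idx i1 i1) ord0.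
  set w := a%:C * v00 + b%:C * v11.
  have hw : conjc w = a%:C * conjc v00 + b%:C * conjc v11.
    by rewrite /w conjcD !conjcM !conjc_real.
  set E := (X in 0 <= X).
  have -> : E = w * conjc w + (q - m1)%:C * (v01 * conjc v01) + (p - m1)%:C * (v10 * conjc v10).
    by rewrite hw /E /w; ring.
  by rewrite !addr_ge0 ?mulcJ_ge0 // mulr_ge0 ?mulcJ_ge0 ?ler0c.
- rewrite trP !PiE /piF /=; closeC R.
- apply/matrixP => i k; rewrite /ptr2 /diagm.
  case: (ord2P i) => ->; case: (ord2P k) => ->; rewrite !mxE !sum2 !PiE /piF /=; closeC R.
- apply/matrixP => i k; rewrite /ptr1 /diagm.
  case: (ord2P i) => ->; case: (ord2P k) => ->; rewrite !mxE !sum2 !PiE /piF /=; closeC R.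
Qed.

Lemma Pi_cost p q m1 m2 s :
  p - m1 + m2 = 1 - q -> s = Num.sqrt m1 * Num.sqrt m2 -> 0 <= m1 -> 0 <= m2 ->
  Re (\tr (Pi p q m1 m2 s *m Csymm2 R)) = 8 - 4 * (Num.sqrt m1 + Num.sqrt m2) ^+ 2.
Proof.
move=> e1 hs h1 h2.
rewrite cost_formula ReB !ReMn trP /Om !PiE /piF /= hs.
rewrite sqrrD !sqr_sqrtr //; lra.
Qed.
End F.


Local Open Scope complex_scope.
Local Open Scope ring_scope.
Section G.
Variable R : realType.
Local Notation C := R[i].
Local Notation idx a b := (@mxtens_index 2 2 (a, b)).
Local Notation Re := complex.Re.

Lemma realC (z : C) : 0 <= z -> z = (Re z)%:C.
Proof. by case: z => a b; rewrite lecE /= => /andP [/eqP -> _]. Qed.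

Lemma psd2_diag (H : 'M[C]_2) i : psd H -> 0 <= H i i.
Proof.
move=> hP; set v := \col_k (if k == i then 1 else 0 : C).
have := hP v; rewrite adj_real; last first.
  by move=> k; rewrite /v mxE; case: (_ == _); rewrite ?conjc0 ?conjc1.
rewrite /v; case: (ord2P i) => ->; repeat progress rewrite ?mxE ?sum2 /=.
all: by rewrite ?(mul0r, mulr0, mul1r, mulr1, addr0, add0r).
Qed.

Lemma state_diagm (rho : 'M[C]_2) : state rho -> rho i0 i1 = 0 -> rho i1 i0 = 0 ->
  rho = diagm (Re (rho i0 i0)) /\ 0 <= Re (rho i0 i0) <= 1.
Proof.
move=> [hpsd htr] h01 h10.
have d0 := psd2_diag i0 hpsd; have d1 := psd2_diag i1 hpsd.
have e0 := realC d0; have e1 := realC d1.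
have ht : rho i0 i0 + rho i1 i1 = 1 by rewrite -htr /mxtrace sum2.
have hre : Re (rho i0 i0) + Re (rho i1 i1) = 1 by rewrite -ReD ht.
have r0 := Re_ge0 d0; have r1 := Re_ge0 d1.
split; last by apply/andP; split; lra.
apply/matrixP => i j; rewrite /diagm mxE.
case: (ord2P i) => ->; case: (ord2P j) => -> //=.
rewrite e1; apply: congr1; lra.
Qed.

Lemma Dvalue (rho omega : 'M[C]_2) : state rho -> state omega ->
  rho i0 i1 = 0 -> rho i1 i0 = 0 -> omega i0 i1 = 0 -> omega i1 i0 = 0 ->
  Dsymm2_sq rho omega = V (Re (rho i0 i0)) (Re (omega i0 i0)).
Proof.
move=> sr so r01 r10 o01 o10.
have [er hp] := state_diagm sr r01 r10; have [eo hq] := state_diagm so o01 o10.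
set p := Re (rho i0 i0) in er hp *; set q := Re (omega i0 i0) in eo hq *.
set m1 := Num.min p q; set m2 := Num.min (1 - p) (1 - q).
set s := Num.sqrt m1 * Num.sqrt m2.
move: hp hq => /andP [p0 p1] /andP [q0 q1].
have [f1 [f2 [f3 [f4 [f5 f6]]]]] : p - m1 + m2 = 1 - q /\ q - m1 + m2 = 1 - p /\ 0 <= m1 /\ 0 <= m2 /\
  0 <= q - m1 /\ 0 <= p - m1.
  case: (lerP p q) => hpq.
    have h' : 1 - q <= 1 - p by lra.
    have -> : m1 = p by exact: min_l.
    have -> : m2 = 1 - q by exact: min_r.
    by do ! split; lra.
  have h1 : q <= p by lra.
  have h' : 1 - p <= 1 - q by lra.
  have -> : m1 = q by exact: min_r.
  have -> : m2 = 1 - p by exact: min_l.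
  by do ! split; lra.
have hc := Pi_coupling f1 f2 f3 f4 f5 f6 (erefl s).
have hcost := Pi_cost f1 (erefl s) f3 f4.
rewrite -er -eo in hc.
set S := [set x : R | exists P, coupling rho omega P /\ x = Re (\tr (P *m Csymm2 R))]%classic.
have hlb : forall y, S y -> V p q <= y.
  by move=> y [P [hP ->]]; exact: L1 hP.
have hmem : S (V p q).
  by exists (Pi p q m1 m2 s); split => //; rewrite hcost.
apply/eqP; rewrite eq_le; apply/andP; split.
  have hl : has_lbound S by exists (V p q).
  exact: (ge_inf hl hmem).
by apply: lb_le_inf; [exists (V p q) | exact: hlb].
Qed.

Lemma Dtrans U (rho omega : 'M[C]_2) : unitary U -> (exists P, coupling rho omega P) ->
  Dsymm2_sq (U *m rho *m adjmx U) (U *m omega *m adjmx U) <= Dsymm2_sq rho omega.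
Proof.
move=> hU [P0 hP0].
apply: lb_le_inf.
  by exists (Re (\tr (P0 *m Csymm2 R))), P0.
move=> y [P [hP ->]].
have hlb : has_lbound [set x : R | exists P, coupling (U *m rho *m adjmx U) (U *m omega *m adjmx U) P
   /\ x = Re (\tr (P *m Csymm2 R))]%classic.
  by exists 0 => z [Q [hQ ->]]; exact: L0 hQ.
apply: (ge_inf hlb).
exists (Kt U *m P *m adjmx (Kt U)); split; first exact: coupling_K.
by rewrite cost_K.
Qed.
End G.


Local Open Scope complex_scope.
Local Open Scope ring_scope.
Section H.
Variable R : realType.
Local Notation C := R[i].
Local Notation Re := complex.Re.
Local Notation Im := complex.Im.

Lemma qf2 (H : 'M[C]_2) (c0 c1 : C) :
  (adjmx (\col_k (if k == i0 then c0 else c1)) *m H *m (\col_k (if k == i0 then c0 else c1))) ord0 ord0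
  = conjc c0 * H i0 i0 * c0 + conjc c0 * H i0 i1 * c1 + conjc c1 * H i1 i0 * c0 + conjc c1 * H i1 i1 * c1.
Proof. rewrite !mxE !sum2 !mxE !sum2 !adjE !mxE /=; ring. Qed.

Lemma normC2 (b : C) : conjc b * b = (Re b ^+ 2 + Im b ^+ 2)%:C.
Proof.
case: b => x y; rewrite /=; simpc.
apply/eqP; rewrite eq_complex /=; apply/andP; split; apply/eqP; ring.
Qed.

Lemma herm2 (H : 'M[C]_2) : psd H -> H i1 i0 = conjc (H i0 i1).
Proof.
move=> hP.
have h1 := hP (\col_k (if k == i0 then 1 else 1)).
have h2 := hP (\col_k (if k == i0 then 1 else 'i)).
rewrite qf2 in h1; rewrite qf2 in h2.
have d0 := psd2_diag i0 hP; have d1 := psd2_diag i1 hP.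
move: h1 h2 d0 d1.
move: (H i0 i0) (H i0 i1) (H i1 i0) (H i1 i1) => [a1 a2] [b1 b2] [c1 c2] [d1 d2].
rewrite !lecE /=.
move=> /andP[/eqP e1 _] /andP[/eqP e2 _] /andP[/eqP e3 _] /andP[/eqP e4 _].
apply/eqP; rewrite eq_complex /=; apply/andP; split; apply/eqP; lra.
Qed.

Lemma id2E (i j : 'I_2) : (1%:M : 'M[C]_2) i j = if i == j then 1 else 0.
Proof. by rewrite mxE; case: (i == j). Qed.

Lemma adjmx1 : adjmx (1%:M : 'M[C]_2) = 1%:M.
Proof. apply/matrixP => i j; rewrite adjE conj1E !mxE eq_sym //. Qed.

Ltac foldC R := rewrite -?(rmorph1 (real_complex R)) -?(rmorphB (real_complex R)) -?(rmorphM (real_complex R))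
  -?(rmorphD (real_complex R)) -?(rmorphM (real_complex R)) -?(rmorphD (real_complex R)) -?(rmorphM (real_complex R)).

Lemma diagonalize (H : 'M[C]_2) : psd H ->
  exists U, unitary U /\ (U *m H *m adjmx U) i0 i1 = 0 /\ (U *m H *m adjmx U) i1 i0 = 0.
Proof.
move=> hP.
have h10 := herm2 hP.
have e0 := realC (psd2_diag i0 hP); have e1 := realC (psd2_diag i1 hP).
set a := Re (H i0 i0) in e0; set d := Re (H i1 i1) in e1; set b := H i0 i1 in h10.
have Hexp : forall U : 'M[C]_2,
  (U *m H *m adjmx U) i0 i1 = (U i0 i0 * a%:C + U i0 i1 * conjc b) * conjc (U i1 i0)
      + (U i0 i0 * b + U i0 i1 * d%:C) * conjc (U i1 i1)
  /\ (U *m H *m adjmx U) i1 i0 = (U i1 i0 * a%:C + U i1 i1 * conjc b) * conjc (U i0 i0)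
      + (U i1 i0 * b + U i1 i1 * d%:C) * conjc (U i0 i1).
  by move=> U; rewrite !mxE !sum2 !mxE !sum2 ?adjE -e0 -e1 -h10.
case: (eqVneq b 0) => hb.
  exists 1%:M; split; first by split; rewrite adjmx1 mul1mx.
  by rewrite adjmx1 mul1mx mulmx1 h10 -/b hb conjc0.
set B := Re b ^+ 2 + Im b ^+ 2.
have nb := normC2 b; rewrite -/B in nb.
have hB : 0 < B.
  have B0 : 0 <= B by rewrite /B addr_ge0 // sqr_ge0.
  rewrite lt_def B0 andbT; apply/eqP => hB0.
  move: nb; rewrite hB0 => /eqP; rewrite (rmorph0 (real_complex R)) mulf_eq0 conjc_eq0 orbb.
  by rewrite (negbTE hb).
set dl := (a - d) / 2.
have hr0 : 0 <= dl ^+ 2 + B by rewrite addr_ge0 // ?sqr_ge0 // ltW.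
set r := Num.sqrt (dl ^+ 2 + B).
have hr : r ^+ 2 = dl ^+ 2 + B by rewrite sqr_sqrtr.
have r0 : 0 <= r by apply: sqrtr_ge0.
set g := r - dl.
have hg : 0 < g by rewrite /g; nra.
have ad : a - d = 2 * dl by rewrite /dl; field.
have hgB : g * g + g * (a - d) = B by rewrite ad /g; nra.
set N := B + g * g.
have hN : 0 < N by rewrite /N; nra.
set k := (Num.sqrt N)^-1.
have hk : k * k * N = 1.
  have sN : 0 < Num.sqrt N by rewrite sqrtr_gt0.
  rewrite /k -{3}(sqr_sqrtr (ltW hN)) expr2; field; exact: lt0r_neq0.
have hkC : k%:C * k%:C * (conjc b * b + g%:C * g%:C) = 1.
  rewrite nb; foldC R; apply: congr1; rewrite -hk /N; ring.
have hrel : conjc b * b = g%:C * g%:C + g%:C * (a%:C - d%:C).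
  rewrite nb; foldC R; apply: congr1; lra.
set W : 'M[C]_2 := \matrix_(i, j) (if i == i0 then (if j == i0 then conjc b else g%:C)
                                     else (if j == i0 then - g%:C else b)).
exists (k%:C *: W).
have UE : [/\ (k%:C *: W) i0 i0 = k%:C * conjc b, (k%:C *: W) i0 i1 = k%:C * g%:C,
   (k%:C *: W) i1 i0 = k%:C * (- g%:C) & (k%:C *: W) i1 i1 = k%:C * b].
  by rewrite !mxE /=.
have [u00 u01 u10 u11] := UE.
have [ho1 ho2] := Hexp (k%:C *: W).
split; last split.
- split; apply/matrixP => i j; rewrite mxE sum2 !adjE;
  case: (ord2P i) => ->; case: (ord2P j) => ->; rewrite ?u00 ?u01 ?u10 ?u11 ?(conjcM, conjcN, conjc_real, conjcK) id2E /=.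
  1-8: first [ by ring | (transitivity (k%:C * k%:C * (conjc b * b + g%:C * g%:C)); [ring | exact: hkC]) ].
- apply: (etrans ho1); rewrite ?u00 ?u01 ?u10 ?u11 ?(conjcM, conjcN, conjc_real, conjcK).
  transitivity (k%:C * k%:C * conjc b * (conjc b * b - (g%:C * g%:C + g%:C * (a%:C - d%:C)))).
    ring.
  by rewrite hrel subrr mulr0.
- apply: (etrans ho2); rewrite ?u00 ?u01 ?u10 ?u11 ?(conjcM, conjcN, conjc_real, conjcK).
  transitivity (k%:C * k%:C * b * (conjc b * b - (g%:C * g%:C + g%:C * (a%:C - d%:C)))).
    ring.
  by rewrite hrel subrr mulr0.
Qed.
End H.


Local Open Scope complex_scope.
Local Open Scope ring_scope.
Section I.
Variable R : realType.
Local Notation C := R[i].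
Local Notation Re := complex.Re.

Lemma unitary_adj (U : 'M[C]_2) : unitary U -> unitary (adjmx U).
Proof. by move=> [h1 h2]; split; rewrite adjmxK. Qed.

Lemma conj_back (U X : 'M[C]_2) : unitary U ->
  adjmx U *m (U *m X *m adjmx U) *m adjmx (adjmx U) = X.
Proof.
move=> [h1 h2]; rewrite adjmxK !mulmxA h1 mul1mx -mulmxA h1 mulmx1 //.
Qed.

Lemma state_conj (U X : 'M[C]_2) : unitary U -> state X -> state (U *m X *m adjmx U).
Proof.
move=> [h1 h2] [hp ht]; split; first exact: psd_conj.
by rewrite mxtrace_mulC mulmxA h1 mul1mx.
Qed.

Lemma comm_conj (U X Y : 'M[C]_2) : unitary U -> X *m Y = Y *m X ->
  (U *m X *m adjmx U) *m (U *m Y *m adjmx U) = (U *m Y *m adjmx U) *m (U *m X *m adjmx U).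
Proof.
move=> [h1 h2] hXY.
have e : forall A B : 'M[C]_2, (U *m A *m adjmx U) *m (U *m B *m adjmx U) = U *m (A *m B) *m adjmx U.
  by move=> A B; rewrite !mulmxA -[U *m A *m adjmx U *m U]mulmxA h1 mulmx1.
by rewrite !e hXY.
Qed.

Lemma comm_diag (Dm M : 'M[C]_2) : Dm i0 i1 = 0 -> Dm i1 i0 = 0 -> Dm i0 i0 != Dm i1 i1 ->
  Dm *m M = M *m Dm -> M i0 i1 = 0 /\ M i1 i0 = 0.
Proof.
move=> d01 d10 dne h.
have h01 := congr1 (fun X : 'M[C]_2 => X i0 i1) h; have h10 := congr1 (fun X : 'M[C]_2 => X i1 i0) h.
move: h01 h10; rewrite /= !mxE !sum2 d01 d10 !(mul0r, mulr0, addr0, add0r) => h01 h10.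
have dne' : Dm i0 i0 - Dm i1 i1 != 0 by rewrite subr_eq0.
split.
  have : (Dm i0 i0 - Dm i1 i1) * M i0 i1 = 0 by rewrite mulrBl h01 mulrC subrr.
  by move/eqP; rewrite mulf_eq0 (negbTE dne') => /eqP.
have : (Dm i0 i0 - Dm i1 i1) * M i1 i0 = 0 by rewrite mulrBl h10 mulrC subrr.
by move/eqP; rewrite mulf_eq0 (negbTE dne') => /eqP.
Qed.

Definition sc (X : 'M[C]_2) := (X i0 i1 == 0) && (X i1 i0 == 0) && (X i0 i0 == X i1 i1).

Lemma scE (X : 'M[C]_2) : sc X -> X = (X i0 i0)%:M.
Proof.
move=> /andP[/andP[/eqP h1 /eqP h2] /eqP h3].
apply/matrixP => i j; rewrite !mxE.
by case: (ord2P i) => ->; case: (ord2P j) => -> /=.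
Qed.

Lemma sc_conj (U X : 'M[C]_2) : unitary U -> sc X -> U *m X *m adjmx U = X.
Proof.
move=> [h1 h2] hX; rewrite (scE hX) mul_mx_scalar -scalemxAl h2 scalemx1 //.
Qed.


Lemma key (X Y Z : 'M[C]_2) : psd X -> ~~ sc X -> X *m Y = Y *m X -> X *m Z = Z *m X ->
  exists U, unitary U /\ (U *m X *m adjmx U) i0 i1 = 0 /\ (U *m X *m adjmx U) i1 i0 = 0 /\
   ((U *m Y *m adjmx U) i0 i1 = 0 /\ (U *m Y *m adjmx U) i1 i0 = 0) /\
   ((U *m Z *m adjmx U) i0 i1 = 0 /\ (U *m Z *m adjmx U) i1 i0 = 0).
Proof.
move=> hX nsc hY hZ.
have [U [hU [o1 o2]]] := diagonalize hX.
exists U; split => //; split => //; split => //.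
have dne : (U *m X *m adjmx U) i0 i0 != (U *m X *m adjmx U) i1 i1.
  apply/negP => /eqP e; move: nsc; apply/negP/negPn.
  have sD : sc (U *m X *m adjmx U) by rewrite /sc o1 o2 e !eqxx.
  rewrite -(conj_back X hU) (sc_conj (unitary_adj hU) sD) //.
split; apply: comm_diag o1 o2 dne _; exact: comm_conj.
Qed.

Lemma common_diag (A B Cm : 'M[C]_2) : psd A -> psd B -> psd Cm ->
  A *m B = B *m A -> B *m Cm = Cm *m B -> A *m Cm = Cm *m A ->
  exists U, unitary U /\
   ((U *m A *m adjmx U) i0 i1 = 0 /\ (U *m A *m adjmx U) i1 i0 = 0) /\
   ((U *m B *m adjmx U) i0 i1 = 0 /\ (U *m B *m adjmx U) i1 i0 = 0) /\
   ((U *m Cm *m adjmx U) i0 i1 = 0 /\ (U *m Cm *m adjmx U) i1 i0 = 0).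
Proof.
move=> pA pB pC hAB hBC hAC.
have offsc X (U : 'M[C]_2) : unitary U -> sc X -> (U *m X *m adjmx U) i0 i1 = 0 /\ (U *m X *m adjmx U) i1 i0 = 0.
  move=> hU hX; rewrite (sc_conj hU hX).
  by move: hX => /andP[/andP[/eqP -> /eqP ->] _].
have u1 : unitary (1%:M : 'M[C]_2) by split; rewrite adjmx1 mul1mx.
case: (boolP (sc B)) => sB; last first.
  have [U [hU [a1 [a2 [[b1 b2] [c1 c2]]]]]] := key pB sB (esym hAB) hBC.
  by exists U.
case: (boolP (sc A)) => sA; last first.
  have [U [hU [a1 [a2 [[b1 b2] [c1 c2]]]]]] := key pA sA hAB hAC.
  by exists U.
case: (boolP (sc Cm)) => sC; last first.
  have [U [hU [a1 [a2 [[b1 b2] [c1 c2]]]]]] := key pC sC (esym hAC) (esym hBC).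
  exists U; split; first done. split; first exact: offsc hU sA. split; [exact: offsc hU sB | by split].
exists 1%:M; split; first done. split; first exact: offsc u1 sA. split; [exact: offsc u1 sB | exact: offsc u1 sC].
Qed.
End I.


Local Open Scope complex_scope.
Local Open Scope ring_scope.
Section J.
Variable R : realType.
Local Notation C := R[i].
Local Notation Re := complex.Re.

Lemma diag_coupling_ex (rho omega : 'M[C]_2) : state rho -> state omega ->
  rho i0 i1 = 0 -> rho i1 i0 = 0 -> omega i0 i1 = 0 -> omega i1 i0 = 0 ->
  exists P, coupling rho omega P.
Proof.
move=> sr so r01 r10 o01 o10.
have [er hp] := state_diagm sr r01 r10; have [eo hq] := state_diagm so o01 o10.
set p := Re (rho i0 i0) in er hp *; set q := Re (omega i0 i0) in eo hq *.
set m1 := Num.min p q; set m2 := Num.min (1 - p) (1 - q).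
move: hp hq => /andP [p0 p1] /andP [q0 q1].
have [f1 [f2 [f3 [f4 [f5 f6]]]]] : p - m1 + m2 = 1 - q /\ q - m1 + m2 = 1 - p /\ 0 <= m1 /\ 0 <= m2 /\
  0 <= q - m1 /\ 0 <= p - m1.
  case: (lerP p q) => hpq.
    have h' : 1 - q <= 1 - p by lra.
    have -> : m1 = p by exact: min_l.
    have -> : m2 = 1 - q by exact: min_r.
    by do ! split; lra.
  have h1 : q <= p by lra.
  have h' : 1 - p <= 1 - q by lra.
  have -> : m1 = q by exact: min_r.
  have -> : m2 = 1 - p by exact: min_l.
  by do ! split; lra.
have hc := Pi_coupling f1 f2 f3 f4 f5 f6 (erefl (Num.sqrt m1 * Num.sqrt m2)).
rewrite -er -eo in hc; by exists (Pi p q m1 m2 (Num.sqrt m1 * Num.sqrt m2)).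
Qed.

Theorem main (rho sigma omega : 'M[R[i]]_2) :
  state rho -> state sigma -> state omega ->
  rho *m sigma = sigma *m rho -> sigma *m omega = omega *m sigma ->
  rho *m omega = omega *m rho ->
  dsymm2_sq rho omega <= dsymm2_sq rho sigma + dsymm2_sq sigma omega.
Proof.
move=> sr ss so hrs hso hro.
have [U [hU [[r01 r10] [[s01 s10] [o01 o10]]]]] := common_diag sr.1 ss.1 so.1 hrs hso hro.
have sr' := state_conj hU sr; have ss' := state_conj hU ss; have so' := state_conj hU so.
have hUa := unitary_adj hU.
have B1 : Dsymm2_sq rho omega <= Dsymm2_sq (U *m rho *m adjmx U) (U *m omega *m adjmx U).
  have := Dtrans hUa (diag_coupling_ex sr' so' r01 r10 o01 o10).
  by rewrite !(conj_back _ hU).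
have B2 : Dsymm2_sq sigma sigma <= Dsymm2_sq (U *m sigma *m adjmx U) (U *m sigma *m adjmx U).
  have := Dtrans hUa (diag_coupling_ex ss' ss' s01 s10 s01 s10).
  by rewrite !(conj_back _ hU).
have B3 : Dsymm2_sq (U *m rho *m adjmx U) (U *m sigma *m adjmx U) <= Dsymm2_sq rho sigma.
  apply: Dtrans => //.
  have [P hP] := diag_coupling_ex sr' ss' r01 r10 s01 s10.
  have := coupling_K hUa hP; rewrite !(conj_back _ hU) => h; by exists (Kt (adjmx U) *m P *m adjmx (Kt (adjmx U))).
have B4 : Dsymm2_sq (U *m sigma *m adjmx U) (U *m omega *m adjmx U) <= Dsymm2_sq sigma omega.
  apply: Dtrans => //.
  have [P hP] := diag_coupling_ex ss' so' s01 s10 o01 o10.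
  have := coupling_K hUa hP; rewrite !(conj_back _ hU) => h; by exists (Kt (adjmx U) *m P *m adjmx (Kt (adjmx U))).
rewrite (Dvalue sr' so' r01 r10 o01 o10) in B1.
rewrite (Dvalue ss' ss' s01 s10 s01 s10) in B2.
rewrite (Dvalue sr' ss' r01 r10 s01 s10) in B3.
rewrite (Dvalue ss' so' s01 s10 o01 o10) in B4.
have [_ hp] := state_diagm sr' r01 r10.
have [_ hs] := state_diagm ss' s01 s10.
have [_ hq] := state_diagm so' o01 o10.
have T := G_tri hp hq hs.
move: B1 B2 B3 B4 T; rewrite /V.
set p := Re _; set s := Re _; set q := Re _.
rewrite /dsymm2_sq => B1 B2 B3 B4 T.
lra.
Qed.
End J.


Unset Implicit Arguments.
Theorem proposition3p4 (R : realType) (rho sigma omega : 'M[R[i]]_2) :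
  state rho -> state sigma -> state omega ->
  rho *m sigma = sigma *m rho -> sigma *m omega = omega *m sigma ->
  rho *m omega = omega *m rho ->
  dsymm2_sq rho omega <= dsymm2_sq rho sigma + dsymm2_sq sigma omega.
Proof. exact: main. Qed.
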